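(* Let $S$ be a semigroup and $p$ an ultrafilter on $S$. If $p$ is a regular strongly productive ultrafilter, then $p$ is idempotent.
   Context: For a sequence $\vec{x}=(x_n)_{n\in\omega}$ in $S$, $\mathrm{FP}(\vec{x})$ is the set of all products $\prod_{i\in a}x_i$ (in increasing order of indices), $a$ ranging over finite nonempty subsets of $\omega$, and $\mathrm{FP}_k(\vec{x})=\mathrm{FP}((x_{n+k})_{n\in\omega})$. An ultrafilter $p$ on $S$ is strongly productive if every $A\in p$ contains some $\mathrm{FP}(\vec{x})$ which belongs to $p$. A nonprincipal strongly productive ultrafilter $p$ is regular if there is $B\in p$ such that for every sequence $\vec{x}$ with $\mathrm{FP}(\vec{x})\subseteq B$, the set $x_0\mathrm{FP}_1(\vec{x})$ does not belong to $p$. An ultrafilter $p$ is idempotent if for every $A\in p$ the set $\{x\in S: x^{-1}A\in p\}$ belongs to $p$, where $x^{-1}A=\{y\in S: xy\in A\}$. *)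

(* Defs.v *)
Set Implicit Arguments.
From Stdlib Require Import List Arith Sorted.
Import ListNotations.

Section Defs.
Variable S : Type.
Variable op : S -> S -> S.

Definition subset (A B : S -> Prop) : Prop := forall x, A x -> B x.

Definition ultrafilter (p : (S -> Prop) -> Prop) : Prop :=
  p (fun _ => True) /\
  ~ p (fun _ => False) /\
  (forall A B, p A -> subset A B -> p B) /\
  (forall A B, p A -> p B -> p (fun x => A x /\ B x)) /\
  (forall A, p A \/ p (fun x => ~ A x)).

Definition nonprincipal (p : (S -> Prop) -> Prop) : Prop :=
  forall a : S, ~ p (fun x => x = a).

Fixpoint prodl (x : nat -> S) (i : nat) (l : list nat) : S :=
  match l with
  | [] => x i
  | j :: l' => op (x i) (prodl x j l')
  end.

(* FP(x): products over finite nonempty subsets of omega, listed in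
   strictly increasing order of indices *)
Definition FP (x : nat -> S) : S -> Prop :=
  fun y => exists (i : nat) (l : list nat),
    Sorted lt (i :: l) /\ y = prodl x i l.

Definition FPk (k : nat) (x : nat -> S) : S -> Prop :=
  FP (fun n => x (n + k)).

Definition strongly_productive (p : (S -> Prop) -> Prop) : Prop :=
  forall A, p A -> exists x : nat -> S, subset (FP x) A /\ p (FP x).

Definition regular (p : (S -> Prop) -> Prop) : Prop :=
  nonprincipal p /\ strongly_productive p /\
  exists B, p B /\
    forall x : nat -> S, subset (FP x) B ->
      ~ p (fun z => exists y, FPk 1 x y /\ z = op (x 0) y).

Definition idempotent (p : (S -> Prop) -> Prop) : Prop :=
  forall A, p A -> p (fun x => p (fun y => A (op x y))).
End Defs.
Arguments ultrafilter {S} p.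
Arguments nonprincipal {S} p.

(* Main.v *)
Require Import Defs.
From Stdlib Require Import List Arith Sorted Lia.
Import ListNotations.

Section Aux.
Variable S : Type.
Variable op : S -> S -> S.
Hypothesis op_assoc : forall a b c : S, op a (op b c) = op (op a b) c.

Lemma prodl_ext (f g : nat -> S) i l : (forall n, f n = g n) ->
  prodl op f i l = prodl op g i l.
Proof. intros H; revert i; induction l; intros i; simpl; rewrite H; [|rewrite IHl]; auto. Qed.

Lemma Sorted_map_in (P : nat -> Prop) (R : nat -> nat -> Prop) f l :
  Forall P l -> (forall a b, P a -> P b -> R a b -> R (f a) (f b)) ->
  Sorted R l -> Sorted R (map f l).
Proof.
  intros HP Hm. induction l as [|a l IH]; intros Hs; simpl; constructor.
  - apply Sorted_inv in Hs as [Hs _]. inversion HP; subst. auto.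
  - apply Sorted_inv in Hs as [_ Hh]. destruct l as [|b l]; simpl; constructor.
    inversion Hh as [|? ? Hr]; subst. inversion HP as [|? ? Pa HP']; subst.
    inversion HP' as [|? ? Pb]; subst. auto.
Qed.

Lemma sorted_ge i l : Sorted lt (i :: l) -> Forall (fun n => i <= n) (i :: l).
Proof.
  intros Hs. apply Sorted_StronglySorted in Hs; [|intros ? ? ? ? ?; lia].
  apply StronglySorted_inv in Hs as [_ Hf]. constructor; [lia|].
  eapply Forall_impl; [|exact Hf]. simpl; intros; lia.
Qed.

Lemma prodl_up (x : nat -> S) k i l :
  prodl op (fun n => x (n + k)) i l = prodl op x (i + k) (map (fun n => n + k) l).
Proof. revert i; induction l; intros i; simpl; [|rewrite IHl]; auto. Qed.

Lemma prodl_down (x : nat -> S) k i l : Forall (fun n => k <= n) (i :: l) ->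
  prodl op (fun n => x (n + k)) (i - k) (map (fun n => n - k) l) = prodl op x i l.
Proof.
  revert i; induction l; intros i H; inversion H; subst; simpl.
  - f_equal; lia.
  - rewrite IHl by auto. replace (i - k + k) with i by lia. auto.
Qed.

Lemma FP_shift_sub (x : nat -> S) k : subset (FP op (fun n => x (n + k))) (FP op x).
Proof.
  intros z [i [l [Hs ->]]]. exists (i + k), (map (fun n => n + k) l). split.
  - apply (Sorted_map_in (fun _ => True) lt (fun n => n + k) (i :: l)); auto.
    + apply Forall_forall; auto.
    + intros; lia.
  - apply prodl_up.
Qed.

Lemma FP_shift_down (x : nat -> S) k i l : Sorted lt (i :: l) -> k <= i ->
  FP op (fun n => x (n + k)) (prodl op x i l).
Proof.
  intros Hs Hk. pose proof (sorted_ge _ _ Hs) as Hf.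
  assert (Hf' : Forall (fun n => k <= n) (i :: l)).
  { eapply Forall_impl; [|exact Hf]. simpl; intros; lia. }
  exists (i - k), (map (fun n => n - k) l). split.
  - apply (Sorted_map_in (fun n => k <= n) lt (fun n => n - k) (i :: l)); auto.
    intros; lia.
  - symmetry; apply prodl_down; auto.
Qed.

Lemma FP_decomp (y : nat -> S) z : FP op y z ->
  z = y 0 \/ (exists w, FPk op 1 y w /\ z = op (y 0) w) \/ FPk op 1 y z.
Proof.
  intros [i [l [Hs ->]]]. destruct i as [|i].
  - destruct l as [|j l]; [left; reflexivity|]. right; left.
    exists (prodl op y j l). split; [|reflexivity].
    apply Sorted_inv in Hs as [Hs Hh]. inversion Hh; subst.
    apply FP_shift_down; auto.
  - right; right. apply FP_shift_down; auto. lia.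
Qed.

Lemma prodl_app (x : nat -> S) i l j m :
  prodl op x i (l ++ j :: m) = op (prodl op x i l) (prodl op x j m).
Proof.
  revert i; induction l; intros i; simpl; auto.
  rewrite IHl, op_assoc; auto.
Qed.

Lemma sorted_app i l n j m : Sorted lt (i :: l) -> Forall (fun t => t <= n) (i :: l) ->
  n < j -> Sorted lt (j :: m) -> Sorted lt (i :: l ++ j :: m).
Proof.
  revert i; induction l as [|a l IH]; intros i Hs Hf Hn Hj; simpl.
  - constructor; auto. constructor. inversion Hf; lia.
  - apply Sorted_inv in Hs as [Hs Hh]. inversion Hh; subst. inversion Hf; subst.
    constructor; [apply IH; auto|]. constructor; auto.
Qed.
End Aux.

Theorem mainTheorem3 (S : Type) (op : S -> S -> S)
  (op_assoc : forall a b c : S, op a (op b c) = op (op a b) c)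
  (p : (S -> Prop) -> Prop)
  (Hultra : ultrafilter p)
  (Hreg : regular op p) :
  idempotent op p.
Proof.
  destruct Hultra as [HT [HF [Hup [Hint Hmax]]]].
  destruct Hreg as [Hnp [Hsp [B [HB HBreg]]]].
  intros A HA.
  destruct (Hsp (fun z => A z /\ B z) (Hint _ _ HA HB)) as [x [Hsub HFP]].
  assert (Hk : forall k, p (FPk op k x)).
  { induction k as [|k IH].
    - eapply Hup; [exact HFP|]. intros z [i [l [Hs ->]]]. exists i, l; split; auto.
      apply prodl_ext; intros; f_equal; lia.
    - set (y := fun n => x (n + k)).
      assert (HyB : subset (FP op y) B).
      { intros z Hz. apply (Hsub z). apply FP_shift_sub with (k := k). exact Hz. }
      pose proof (HBreg y HyB) as Hn1. pose proof (Hnp (y 0)) as Hn0.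
      destruct (Hmax (fun z => z = y 0)) as [H0|H0]; [contradiction|].
      destruct (Hmax (fun z => exists w, FPk op 1 y w /\ z = op (y 0) w)) as [H1|H1];
        [contradiction|].
      eapply Hup; [exact (Hint _ _ (Hint _ _ IH H0) H1)|].
      intros z [[Hz Hz0] Hz1]. unfold FPk in Hz.
      destruct (FP_decomp _ op y z Hz) as [E|[E|E]]; try contradiction.
      destruct E as [i [l [Hs ->]]]. exists i, l; split; auto.
      apply prodl_ext; intros; unfold y; f_equal; lia. }
  eapply Hup; [exact HFP|]. intros a Ha.
  destruct Ha as [i [l [Hs ->]]].
  set (n := list_max (i :: l)).
  eapply Hup; [exact (Hk (Nat.succ n))|]. intros b [j [m [Hs2 ->]]].
  rewrite prodl_up. rewrite <- prodl_app by exact op_assoc.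
  apply (Hsub _). exists i, (l ++ (j + Nat.succ n) :: map (fun t => t + Nat.succ n) m). split; auto.
  apply sorted_app with (n := n); auto.
  - apply list_max_le. unfold n; apply Nat.le_refl.
  - apply Nat.lt_lt_add_l, Nat.lt_succ_diag_r.
  - apply (Sorted_map_in (fun _ => True) lt (fun t => t + Nat.succ n) (j :: m)); auto.
    + apply Forall_forall; auto.
    + intros; lia.
Qed.
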